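(* Let $y>0$ be fixed. For $\xi\in\mathbf{R}^{2\times 2}$ let $[\xi]=\xi-\xi_{11}\,e_1\otimes e_1$, where $e_1=(1,0)$, and define $W:\mathbf{R}^{2\times 2}\to\mathbf{R}$ by \[W(\xi)=\big|([\xi],\det\xi-y)\big|,\] the Euclidean norm of the vector $([\xi],\det\xi-y)\in\mathbf{R}^{2\times2}\times\mathbf{R}\cong\mathbf{R}^5$. Then for every $\xi\in\mathbf{R}^{2\times 2}$ and every $\eta\in\mathbf{R}^{2\times 2}$, \[W(\xi+\eta)-W(\xi)-DW(\xi)\cdot\eta\;\ge\;\rho(\xi)\det\eta,\qquad\text{where }\rho(\xi)=\frac{\det\xi-y}{W(\xi)}.\]
   Context: For $2\times2$ matrices, $\xi\cdot\eta=\mathrm{tr}(\xi^T\eta)$; for $a,b\in\mathbf{R}^2$, $a\otimes b$ is the matrix with $(i,j)$ entry $a_ib_j$. The function $W$ never vanishes (since $y\neq0$) and is differentiable everywhere; $DW(\xi)$ denotes its derivative (gradient) at $\xi$. *)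

(* Defs.v *)
From HB Require Import structures.
From mathcomp Require Import all_boot all_order all_algebra.
From mathcomp Require Import all_classical all_reals all_analysis.
Set Implicit Arguments. Unset Strict Implicit. Unset Printing Implicit Defensive.
Import Order.TTheory GRing.Theory Num.Theory.
Import numFieldNormedType.Exports.
Local Open Scope ring_scope.

(* [xi] = xi - xi_11 e1 (x) e1 : zero out the (1,1) entry (index 0,0). *)
Definition bracket {R : realType} (xi : 'M[R]_2) : 'M[R]_2 :=
  xi - (xi 0 0) *: delta_mx 0 0.

Definition W {R : realType} (y : R) (xi : 'M[R]_2) : R :=
  Num.sqrt ((\sum_(i < 2) \sum_(j < 2) (bracket xi i j) ^+ 2)
            + (\det xi - y) ^+ 2).

Definition rho {R : realType} (y : R) (xi : 'M[R]_2) : R :=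
  (\det xi - y) / W y xi.

(* Main.v *)
Require Import Defs.
From HB Require Import structures.
From mathcomp Require Import all_boot all_order all_algebra.
From mathcomp Require Import all_classical all_reals all_analysis.
From mathcomp Require Import ring lra.
Import Order.TTheory GRing.Theory Num.Theory.
Import numFieldNormedType.Exports.
Local Open Scope ring_scope.
Lemma pos (R : realType) (a b c e y : R) : 0 < y -> 0 < a^+2 + b^+2 + c^+2 + (e*c - a*b - y)^+2.
Proof.
move=> hy.
have [->|ha] := eqVneq a 0.
  have [->|hc] := eqVneq c 0.
    rewrite !mul0r mulr0 !sub0r. have := sqr_ge0 b; nra.
  have : 0 < c ^+ 2 by rewrite exprn_even_gt0.
  have := sqr_ge0 b; have := sqr_ge0 (e * c - 0 * b - y); nra.
have : 0 < a ^+ 2 by rewrite exprn_even_gt0.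
have := sqr_ge0 b; have := sqr_ge0 c; have := sqr_ge0 (e * c - a * b - y); nra.
Qed.
Lemma cs4 (R : realType) (a1 a2 a3 a4 b1 b2 b3 b4 : R) :
  a1*b1 + a2*b2 + a3*b3 + a4*b4 <=
  Num.sqrt (a1^+2 + a2^+2 + a3^+2 + a4^+2) * Num.sqrt (b1^+2 + b2^+2 + b3^+2 + b4^+2).
Proof.
rewrite -sqrtrM; last by rewrite !addr_ge0 // sqr_ge0.
set p := _ + a4 * b4.
have [p0|p0] := leP p 0.
  by apply: le_trans p0 _; exact: sqrtr_ge0.
rewrite -[p]gtr0_norm // -sqrtr_sqr; apply: ler_wsqrtr.
rewrite /p.
have -> : (a1 ^+ 2 + a2 ^+ 2 + a3 ^+ 2 + a4 ^+ 2) * (b1 ^+ 2 + b2 ^+ 2 + b3 ^+ 2 + b4 ^+ 2)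
  = (a1 * b1 + a2 * b2 + a3 * b3 + a4 * b4) ^+ 2 +
    ((a1*b2-a2*b1)^+2 + (a1*b3-a3*b1)^+2 + (a1*b4-a4*b1)^+2 +
     (a2*b3-a3*b2)^+2 + (a2*b4-a4*b2)^+2 + (a3*b4-a4*b3)^+2) by ring.
by rewrite lerDl !addr_ge0 // sqr_ge0.
Qed.
Lemma det22 (R : comRingType) (M : 'M[R]_2) :
  \det M = M 0 0 * M 1 1 - M 0 1 * M 1 0.
Proof.
rewrite (expand_det_row _ 0) !big_ord_recl big_ord0 /cofactor !det_mx11 /=.
rewrite !mxE /=.
have -> : (lift 0 0 : 'I_2) = 1 by apply/val_inj.

have -> : (lift 1 (0 : 'I_1) : 'I_2) = 0 by apply/val_inj.
have -> : (ord0 : 'I_2) = 0 by apply/val_inj.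
rewrite /= expr0 expr1; ring.
Qed.

Lemma sum22 (R : realType) (f : 'I_2 -> 'I_2 -> R) :
  \sum_(i < 2) \sum_(j < 2) f i j = f 0 0 + f 0 1 + f 1 0 + f 1 1.
Proof.
rewrite !big_ord_recr !big_ord0 /= !add0r.
have -> : (ord_max : 'I_2) = 1 by apply/val_inj.
have -> : (widen_ord (leqnSn 1) ord_max : 'I_2) = 0 by apply/val_inj.
by rewrite !addrA.
Qed.

Lemma Wform (R : realType) (y : R) (M : 'M[R]_2) :
  W y M = Num.sqrt (M 0 1 ^+ 2 + M 1 0 ^+ 2 + M 1 1 ^+ 2 +
     (M 0 0 * M 1 1 - M 0 1 * M 1 0 - y) ^+ 2).
Proof.
rewrite /W sum22 det22 /bracket !mxE /=.
congr (Num.sqrt _); ring.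
Qed.

Section S.
Variable R : realType.

Definition crd (i j : 'I_2) := fun N : 'M[R]_2 => N i j.

Global Instance is_diff_crd (i j : 'I_2) (x : 'M[R]_2) : is_diff x (crd i j) (crd i j).
Proof.
have @f : {linear 'M[R]_2 -> R}.
  by exists (fun N : 'M[R]_(_, _) => N i j); do 2![eexists]; do ?[constructor];
     rewrite ?mxE// => ? *; rewrite ?mxE//; move=> ?; rewrite !mxE.
have -> : crd i j = f by [].
apply: DiffDef; first exact/linear_differentiable/coord_continuous.
by rewrite diff_lin //; exact: coord_continuous.
Qed.

Definition Qf (y : R) : 'M[R]_2 -> R :=
  crd 0 1 * crd 0 1 + crd 1 0 * crd 1 0 + crd 1 1 * crd 1 1 +
  (crd 0 0 * crd 1 1 - crd 0 1 * crd 1 0 - cst y) *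
  (crd 0 0 * crd 1 1 - crd 0 1 * crd 1 0 - cst y).

Lemma dQ (y : R) (x : 'M[R]_2) : {df | is_diff x (Qf y) df}.
Proof. eexists. rewrite /Qf. typeclasses eauto. Defined.

Lemma WQ (y : R) : W y = Num.sqrt \o Qf y.
Proof.
apply/funext => M; rewrite Wform /Qf /crd /= !fctE /=. congr (Num.sqrt _); ring.
Qed.

End S.
Arguments Qf {R}.
Arguments dQ {R}.
Arguments WQ {R}.

Theorem proposition2p1 (R : realType) (y : R) (hy : 0 < y) (xi eta : 'M[R]_2) :
  rho y xi * \det eta <= W y (xi + eta) - W y xi - 'd (W y) xi eta.
Proof.
have hQ := proj2_sig (dQ y xi).
have Qpos : 0 < Qf y xi.
  rewrite /Qf /crd /= !fctE /=.
  have := @pos R (xi 0 1) (xi 1 0) (xi 1 1) (xi 0 0) y hy.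
  congr (_ < _); ring.
have ds : differentiable (@Num.sqrt R) (Qf y xi).
  apply/derivable1_diffP.
  have := is_derive1_sqrt Qpos; by case.
have dq : differentiable (Qf y) xi by case: hQ.
rewrite WQ diff_comp // /= diff1E // derive1E derive_sqrt //.
rewrite (@diff_val _ _ _ _ _ _ _ hQ) /=.
rewrite /rho WQ /= !det22 /Qf /crd /= !fctE /= ?mxE /=.
have sE : forall a b : R, a *: b = a * b by [].
have zE : (0 : 'M[R]_2 -> R) eta = 0 by [].
rewrite !sE zE.
move: Qpos; rewrite /Qf /crd /= !fctE => Qpos.
move: (xi 0 0) (xi 0 1) (xi 1 0) (xi 1 1) (eta 0 0) (eta 0 1) (eta 1 0) (eta 1 1) Qpos.
move=> a b c d e f g h Qp.
set A := (b * b + _ + _ + _).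
set B := (_ + _ + _ + _ * (_ - _ - y)).
have A0 : 0 <= A by apply: ltW.
have sApos : 0 < Num.sqrt A by rewrite sqrtr_gt0.
have hs : Num.sqrt A ^+ 2 = A by rewrite sqr_sqrtr.
set s := Num.sqrt A; set t := Num.sqrt B.
have cs : b*(b+f) + c*(c+g) + d*(d+h) + (a*d - b*c - y)*((a+e)*(d+h) - (b+f)*(c+g) - y) <= s * t.
  have := @cs4 R b c d (a*d - b*c - y) (b+f) (c+g) (d+h) ((a+e)*(d+h) - (b+f)*(c+g) - y).
  rewrite /s /t /A /B !expr2 //.
rewrite -subr_ge0.
have -> : t - s - (b * f + b * f + (c * g + c * g) + (d * h + d * h) +
   ((a * d - b * c - y) * (a * h + d * e - (b * g + c * f) - 0) +
    (a * d - b * c - y) * (a * h + d * e - (b * g + c * f) - 0))) * (2 * s)^-1 -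
   (a * d - b * c - y) / s * (e * h - f * g)
  = (s * t - (b*(b+f) + c*(c+g) + d*(d+h) + (a*d - b*c - y)*((a+e)*(d+h) - (b+f)*(c+g) - y))) / s.
  have -> : b*(b+f) + c*(c+g) + d*(d+h) + (a*d - b*c - y)*((a+e)*(d+h) - (b+f)*(c+g) - y)
    = s ^+ 2 + (b*f + c*g + d*h + (a*d-b*c-y)*(a*h+d*e-b*g-c*f)) + (a*d-b*c-y)*(e*h-f*g).
    rewrite hs /A; ring.
  field; by rewrite gt_eqF.
by rewrite divr_ge0 ?subr_ge0 // ltW.
Qed.
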